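(* Let $d\ge1$ and $\tilde\epsilon>0$ be sufficiently small (below an absolute constant), and set $p = \frac{2}{7}\sqrt{\frac{\log(3d)}{\tilde\epsilon}}$, assumed to be a positive integer, and $\gamma = 14\sqrt{\tilde\epsilon\log(3d)}$. Let $\Sigma\in\mathbb{R}^{d\times d}$ be symmetric positive semidefinite and let $\mathbf{M} = \mathbf{M}_G+\mathbf{M}_B$ with $\mathbf{M}_G\succeq 0$, $\mathbf{M}_B\succeq0$, $\|\mathbf{M}\|_p\le(1+\tilde\epsilon)\|\Sigma\|_p$ and $(1+\tilde\epsilon)\Sigma\succeq\mathbf{M}_G\succeq(1-\tilde\epsilon)\Sigma$. Let $\mathbf{M} = \sum_{j\in[d]}\lambda_jv_jv_j^\top$ and $\Sigma = \sum_{j\in[d]}\sigma_ju_ju_j^\top$ be eigendecompositions with $\lambda_1\ge\dots\ge\lambda_d$ and $\sigma_1\ge\dots\ge\sigma_d$, and let $t\in[d]$ satisfy $\sigma_{t+1}<(1-\gamma)\sigma_1$. Then $$\max_{j\in[t]} v_j^\top\Sigma v_j\ge(1-\gamma)\|\Sigma\|_\infty.$$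
   Context: $\|\cdot\|_p$ is the Schatten-$p$ norm ($\ell_p$ norm of the eigenvalues), $\|\Sigma\|_\infty = \sigma_1$ the largest eigenvalue; $\succeq$ is the Loewner order. (If $t = d$, the condition on $\sigma_{t+1}$ is vacuous.) *)

(* Defs.v *)
From HB Require Import structures.
From mathcomp Require Import all_boot all_order all_algebra.
From mathcomp Require Import all_classical all_reals all_analysis.
Set Implicit Arguments. Unset Strict Implicit. Unset Printing Implicit Defensive.
Import Order.TTheory GRing.Theory Num.Theory.
Local Open Scope ring_scope.

Definition psd (R : realType) (d : nat) (A : 'M[R]_d) : Prop :=
  A^T = A /\ forall x : 'cV[R]_d, 0 <= (x^T *m A *m x) 0 0.

Definition loewner_ge (R : realType) (d : nat) (A B : 'M[R]_d) : Prop :=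
  psd (A - B).

(* A = V diag(lam) V^T with V orthogonal and lam sorted nonincreasingly:
   an eigendecomposition A = sum_j lam_j v_j v_j^T, v_j = col j V. *)
Definition eigdecomp (R : realType) (d : nat) (A V : 'M[R]_d) (lam : 'I_d -> R)
  : Prop :=
  V^T *m V = 1%:M /\ A = V *m diag_mx (\row_j lam j) *m V^T /\
  (forall i j : 'I_d, (i <= j)%N -> lam j <= lam i).

(* l_p norm of an eigenvalue vector: the Schatten-p norm of the matrix. *)
Definition lp_norm (R : realType) (d p : nat) (lam : 'I_d -> R) : R :=
  (\sum_(i < d) `|lam i| ^+ p) `^ (p%:R^-1).

(* Main.v *)
Require Import Defs.
From HB Require Import structures.
From mathcomp Require Import all_boot all_order all_algebra.
From mathcomp Require Import all_classical all_reals all_analysis.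
From mathcomp Require Import ring lra.
Import Order.TTheory GRing.Theory Num.Theory.
Local Open Scope ring_scope.


Section A.
Variable R : realType.

Lemma tangent_pow (a b : R) (n : nat) : 0 <= a -> 0 <= b ->
  a ^+ n.+1 + n.+1%:R * a ^+ n * (b - a) <= b ^+ n.+1.
Proof.
move=> a0 b0; elim: n => [|n IH].
  rewrite expr0 expr1 mulr1 mul1r; lra.
have h1 : 0 <= a ^+ n by exact: exprn_ge0.
have H : b * (a ^+ n.+1 + n.+1%:R * a ^+ n * (b - a)) <= b * b ^+ n.+1 by exact: ler_wpM2l.
rewrite [b ^+ n.+2]exprS; apply: le_trans H.
rewrite !exprS -[n.+2]addn1 -[n.+1]addn1 !natrD.
have k0 : 0 <= (n%:R : R) by exact: ler0n.
have : 0 <= (n%:R + 1) * a ^+ n * (b - a) ^+ 2 by rewrite mulr_ge0 ?sqr_ge0 // mulr_ge0 // addr_ge0.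
move: (a ^+ n) h1 (n%:R : R) k0 => c h1 k k0 H2.
nra.
Qed.

Lemma gap_mono (n : nat) (x y l : R) : 0 <= x -> x <= y -> y <= l ->
  n.+1%:R * l * x ^+ n - n%:R * x ^+ n.+1 <= n.+1%:R * l * y ^+ n - n%:R * y ^+ n.+1.
Proof.
move=> x0 xy yl.
have y0 : 0 <= y by exact: le_trans xy.
have T := tangent_pow _ _ n x0 y0.
have hxy : x ^+ n <= y ^+ n by rewrite lerXn2r // nnegrE.
have hn : 0 <= (n.+1%:R : R) by exact: ler0n.
have H1 : n.+1%:R * y * (y ^+ n - x ^+ n) <= n.+1%:R * l * (y ^+ n - x ^+ n).
  by rewrite ler_wpM2r ?subr_ge0 // ler_wpM2l.
rewrite exprS [y ^+ n.+1]exprS in T *.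
rewrite -[n.+1]addn1 natrD in T H1 hn *.
move: (x ^+ n) (y ^+ n) (n%:R : R) hxy T H1 hn => a b k hab T H1 hn.
nra.
Qed.

Lemma gap_lb (m : nat) (l x th phi : R) : 0 <= l -> 0 <= x -> 0 < th -> th <= 1 ->
  phi = 1 - th ^+ m.+1 * (1 + m.+1%:R * (1 - th)) ->
  0 <= phi ->
  phi * th * l ^+ m.+2 - phi * l ^+ m.+1 * x <=
  th * (l ^+ m.+2 - x ^+ m.+2 - m.+2%:R * x ^+ m.+1 * (l - x)).
Proof.
move=> l0 x0 th0 th1 phiE phi0.
have gap0 : 0 <= l ^+ m.+2 - x ^+ m.+2 - m.+2%:R * x ^+ m.+1 * (l - x).
  have := tangent_pow _ _ m.+1 x0 l0; lra.
case: (lerP x (th * l)) => hx.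
- have thl : th * l <= l by rewrite ler_piMl.
  have := gap_mono m.+1 _ _ _ x0 hx thl.
  have E : l ^+ m.+2 - x ^+ m.+2 - m.+2%:R * x ^+ m.+1 * (l - x)
      = l ^+ m.+2 - (m.+2%:R * l * x ^+ m.+1 - m.+1%:R * x ^+ m.+2).
    rewrite [x ^+ m.+2]exprS.
    have -> : (m.+2%:R : R) = m.+1%:R + 1 by rewrite -addn1 natrD.
    ring.
  have E2 : m.+2%:R * l * (th * l) ^+ m.+1 - m.+1%:R * (th * l) ^+ m.+2
      = l ^+ m.+2 * (th ^+ m.+1 * (1 + m.+1%:R * (1 - th))).
    rewrite !exprMn [th ^+ m.+2]exprS [l ^+ m.+2]exprS.
    have -> : (m.+2%:R : R) = m.+1%:R + 1 by rewrite -addn1 natrD.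
    ring.
  rewrite E E2 => H.
  have H3 : phi * l ^+ m.+2 <= l ^+ m.+2 - (m.+2%:R * l * x ^+ m.+1 - m.+1%:R * x ^+ m.+2).
    rewrite phiE; move: H; set u := th ^+ m.+1 * _; lra.
  have H4 : 0 <= phi * l ^+ m.+1 * x by rewrite !mulr_ge0 // exprn_ge0.
  have H5 : phi * th * l ^+ m.+2 = th * (phi * l ^+ m.+2) by ring.
  apply: le_trans (_ : th * (phi * l ^+ m.+2) <= _); last by rewrite ler_wpM2l // ?ltW // -E.
  lra.
- have : phi * l ^+ m.+1 * (th * l) <= phi * l ^+ m.+1 * x.
    by apply: ler_wpM2l; [rewrite mulr_ge0 // exprn_ge0 | exact: ltW].
  move=> H.
  have E3 : phi * th * l ^+ m.+2 = phi * l ^+ m.+1 * (th * l) by rewrite [l ^+ m.+2]exprS; ring.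
  have G : 0 <= th * (l ^+ m.+2 - x ^+ m.+2 - m.+2%:R * x ^+ m.+1 * (l - x)) by rewrite mulr_ge0 // ltW.
  rewrite E3; lra.
Qed.

Lemma p4_bernoulli (a : R) (n : nat) : 0 <= a -> a <= 1 -> 1 - n%:R * a <= (1 - a) ^+ n.
Proof.
move=> a0 a1; elim: n => [|n IH]; first by rewrite mul0r subr0 expr0.
rewrite exprS -[n.+1]addn1 natrD.
have h : 0 <= 1 - a by lra.
have : (1 - a) * (1 - n%:R * a) <= (1 - a) * (1 - a) ^+ n by exact: ler_wpM2l.
have : 0 <= (n%:R : R) * a * a by rewrite mulr_ge0 // mulr_ge0.
move: ((1 - a) ^+ n) => c; nra.
Qed.

Lemma pow_le_expR (a : R) (n : nat) : 0 <= a -> a <= 1 -> (1 - a) ^+ n <= expR (- (a * n%:R)).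
Proof.
move=> a0 a1; rewrite -mulNr expRM_natr; apply: lerXn2r.
- by rewrite nnegrE; lra.
- by rewrite nnegrE ltW // expR_gt0.
- by have := expR_ge1Dx (- a); lra.
Qed.

End A.
Arguments tangent_pow {R} a b n.
Arguments gap_mono {R} n x y l.
Arguments gap_lb {R} m l x th phi.
Arguments p4_bernoulli {R} a n.
Arguments pow_le_expR {R} a n.



Section B.
Variable R : realType.

Lemma rearr (N t : nat) (f al : 'I_N.+1 -> R) :
  (0 < t)%N -> (t <= N.+1)%N ->
  (forall i j : 'I_N.+1, (i <= j)%N -> f j <= f i) ->
  (forall j, 0 <= al j) -> (forall j, al j <= 1) ->
  \sum_j al j = \sum_(j < N.+1) ((j < t)%N%:R : R) ->
  \sum_j al j * f j <= \sum_(j < N.+1) (j < t)%N%:R * f j.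
Proof.
move=> t0 tN fdec al0 al1 hs.
have ht : (t.-1 < N.+1)%N by rewrite prednK.
set c := f (Ordinal ht).
have key : 0 <= \sum_(j < N.+1) (((j < t)%N%:R - al j) * (f j - c)).
  apply: sumr_ge0 => j _.
  case: (ltnP j t) => hj /=.
  - apply: mulr_ge0; first by rewrite subr_ge0.
    by rewrite subr_ge0; apply: fdec => /=; rewrite -ltnS prednK.
  - apply: mulr_le0; first by rewrite sub0r oppr_le0.
    by rewrite subr_le0; apply: fdec => /=; rewrite (leq_trans (leq_pred t)).
have E : \sum_(j < N.+1) (((j < t)%N%:R - al j) * (f j - c)) =
  (\sum_(j < N.+1) (j < t)%N%:R * f j - \sum_j al j * f j)
  - c * (\sum_(j < N.+1) ((j < t)%N%:R : R) - \sum_j al j).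
  rewrite mulrBr !mulr_sumr -!sumrB; apply: eq_bigr => j _; ring.
rewrite hs subrr mulr0 subr0 in E.
by rewrite -subr_ge0 -E.
Qed.

Lemma p4_core (N m t : nat) (P : 'I_N.+1 -> 'I_N.+1 -> R) (lam x : 'I_N.+1 -> R) (A g phi : R) :
  (forall j i, 0 <= P j i) ->
  (forall j, \sum_i P j i = 1) -> (forall i, \sum_j P j i = 1) ->
  (forall j, 0 <= lam j) -> (forall i j : 'I_N.+1, (i <= j)%N -> lam j <= lam i) ->
  (forall i, 0 <= x i) ->
  (forall i, x i <= \sum_j P j i * lam j) ->
  (forall j : 'I_N.+1, (j < t)%N -> \sum_i P j i * x i <= (1 - g) * A) ->
  (forall i : 'I_N.+1, (t <= i)%N -> x i <= (1 - g) * A) ->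
  x ord0 = A -> 0 < A -> (0 < t)%N -> (t <= N.+1)%N -> 0 < g -> g < 1 ->
  phi = 1 - (1 - g / 2) ^+ m.+1 * (1 + m.+1%:R * (1 - (1 - g / 2))) -> 0 <= phi ->
  N.+1%:R * ((1 - g) * A) ^+ m.+2 <= A ^+ m.+2 / 81 ->
  N.+1%:R * ((1 - g / 4) * A) ^+ m.+2 <= A ^+ m.+2 / 3 ->
  \sum_i x i ^+ m.+2 + g / 4 * phi * (\sum_i x i ^+ m.+2 - A ^+ m.+2 / 81 - A ^+ m.+2 / 3)
    <= \sum_j lam j ^+ m.+2.
Proof.
move=> P0 hsj hsi l0 ldec x0 C1 F H xA A0 t0 tN g0 g1 phiE phi0 tail1 tail2.
set X := \sum_i x i ^+ m.+2.
pose gap j i := lam j ^+ m.+2 - x i ^+ m.+2 - m.+2%:R * x i ^+ m.+1 * (lam j - x i).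
have gap0 : forall j i, 0 <= gap j i.
  move=> j i; rewrite /gap; have := tangent_pow _ _ m.+1 (x0 i) (l0 j); lra.
have S1 : \sum_j lam j ^+ m.+2 = \sum_i \sum_j P j i * lam j ^+ m.+2.
  rewrite exchange_big; apply: eq_bigr => j _; by rewrite -mulr_suml hsj mul1r.
have S2 : forall i, x i ^+ m.+2 + \sum_j P j i * gap j i <= \sum_j P j i * lam j ^+ m.+2.
  move=> i.
  have -> : \sum_j P j i * gap j i = \sum_j P j i * lam j ^+ m.+2 - x i ^+ m.+2
       - m.+2%:R * x i ^+ m.+1 * (\sum_j P j i * lam j - x i).
    transitivity (\sum_j (P j i * lam j ^+ m.+2 - P j i * x i ^+ m.+2
       - m.+2%:R * x i ^+ m.+1 * (P j i * lam j) + m.+2%:R * x i ^+ m.+1 * (P j i * x i))).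
      by apply: eq_bigr => j _; rewrite /gap; ring.
    rewrite big_split /= !sumrB -!mulr_sumr -!mulr_suml hsi; ring.
  have : 0 <= m.+2%:R * x i ^+ m.+1 * (\sum_j P j i * lam j - x i).
    by rewrite mulr_ge0 ?subr_ge0 // mulr_ge0 // exprn_ge0.
  lra.
have S3 : X + \sum_j \sum_i P j i * gap j i <= \sum_j lam j ^+ m.+2.
  rewrite S1 /X [\sum_j \sum_i _]exchange_big /= -big_split /=.
  by apply: ler_sum => i _; exact: S2.
set th := 1 - g / 2.
have th0 : 0 < th by rewrite /th; lra.
have th1 : th <= 1 by rewrite /th; lra.
have phiE' : phi = 1 - th ^+ m.+1 * (1 + m.+1%:R * (1 - th)) by [].
set b := 1 - g / 4.
have S4a : forall j, 0 <= \sum_i P j i * gap j i.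
  by move=> j; apply: sumr_ge0 => i _; rewrite mulr_ge0.
have S4 : forall j : 'I_N.+1, (j < t)%N ->
    g / 4 * phi * (lam j ^+ m.+2 - (b * A) ^+ m.+2) <= \sum_i P j i * gap j i.
  move=> j hj.
  have L := fun i => gap_lb m _ _ _ _ (l0 j) (x0 i) th0 th1 phiE' phi0.
  have L2 : phi * th * lam j ^+ m.+2 - phi * lam j ^+ m.+1 * ((1 - g) * A)
      <= th * \sum_i P j i * gap j i.
    apply: le_trans (_ : phi * th * lam j ^+ m.+2 - phi * lam j ^+ m.+1 * (\sum_i P j i * x i) <= _).
      rewrite lerD2l lerN2; apply: ler_wpM2l; last exact: F.
      by rewrite mulr_ge0 // exprn_ge0.
    have -> : phi * th * lam j ^+ m.+2 - phi * lam j ^+ m.+1 * (\sum_i P j i * x i)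
        = \sum_i P j i * (phi * th * lam j ^+ m.+2 - phi * lam j ^+ m.+1 * x i).
      transitivity (\sum_i (P j i * (phi * th * lam j ^+ m.+2)) - \sum_i (P j i * (phi * lam j ^+ m.+1 * x i))).
        by rewrite -!mulr_suml hsj mul1r mulr_sumr; congr (_ - _); apply: eq_bigr => i _; ring.
      by rewrite -sumrB; apply: eq_bigr => i _; ring.
    rewrite mulr_sumr; apply: ler_sum => i _.
    rewrite [th * _]mulrCA; apply: ler_wpM2l => //; exact: L.
  case: (lerP (b * A) (lam j)) => hl.
  - have h1 : (1 - g) * A <= (1 - g / 4) * th * lam j.
      apply: le_trans (_ : (1 - g / 4) * th * (b * A) <= _); last first.
        by apply: ler_wpM2l => //; rewrite mulr_ge0 // /th; lra.
      rewrite /b /th mulrA; apply: ler_wpM2r; first exact: ltW.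
      nra.
    have h2 : phi * lam j ^+ m.+1 * ((1 - g) * A) <= phi * lam j ^+ m.+1 * ((1 - g / 4) * th * lam j).
      by apply: ler_wpM2l => //; rewrite mulr_ge0 // exprn_ge0.
    have E : phi * lam j ^+ m.+1 * ((1 - g / 4) * th * lam j) = (1 - g / 4) * (phi * th * lam j ^+ m.+2).
      by rewrite [lam j ^+ m.+2]exprS; ring.
    have h3 : th * (g / 4 * phi * lam j ^+ m.+2) <= th * \sum_i P j i * gap j i.
      have -> : th * (g / 4 * phi * lam j ^+ m.+2) = phi * th * lam j ^+ m.+2 - (1 - g / 4) * (phi * th * lam j ^+ m.+2) by ring.
      rewrite -E; apply: le_trans L2; lra.
    rewrite ler_pM2l // in h3; apply: le_trans h3.
    rewrite ler_wpM2l ?mulr_ge0 //; first by lra.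
    rewrite lerBlDr lerDl exprn_ge0 // mulr_ge0 //; [rewrite /b; lra | exact: ltW].
  - apply: le_trans (S4a j).
    rewrite mulr_ge0_le0 //; first by rewrite mulr_ge0 //; lra.
    have hbA : 0 <= b * A by rewrite mulr_ge0 //; [rewrite /b; lra | exact: ltW].
    by rewrite subr_le0 lerXn2r ?nnegrE ?l0 ?hbA // ltW.
have S5 : g / 4 * phi * (\sum_(j < N.+1) (j < t)%N%:R * lam j ^+ m.+2 - A ^+ m.+2 / 3)
    <= \sum_j \sum_i P j i * gap j i.
  apply: le_trans (_ : \sum_(j < N.+1) (j < t)%N%:R * (g / 4 * phi * (lam j ^+ m.+2 - (b * A) ^+ m.+2)) <= _).
    have -> : \sum_(j < N.+1) (j < t)%N%:R * (g / 4 * phi * (lam j ^+ m.+2 - (b * A) ^+ m.+2))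
       = g / 4 * phi * (\sum_(j < N.+1) (j < t)%N%:R * lam j ^+ m.+2 - \sum_(j < N.+1) (j < t)%N%:R * (b * A) ^+ m.+2).
      rewrite -sumrB mulr_sumr; apply: eq_bigr => j _; ring.
    apply: ler_wpM2l; first by rewrite mulr_ge0 //; lra.
    rewrite lerD2l lerN2.
    apply: le_trans tail2.
    have -> : N.+1%:R * ((1 - g / 4) * A) ^+ m.+2 = \sum_(j < N.+1) (b * A) ^+ m.+2.
      by rewrite sumr_const card_ord mulr_natl.
    apply: ler_sum => j _.
    rewrite ler_piMl ?exprn_ge0 //; first by rewrite mulr_ge0 //; [rewrite /b; lra | exact: ltW].
    by case: (j < t)%N.
  apply: ler_sum => j _.
  case: (ltnP j t) => hj; first by rewrite mul1r; exact: S4.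
  by rewrite mul0r; exact: S4a.
have S6 : \sum_(i < N.+1) (i < t)%N%:R * x i ^+ m.+2 <= \sum_(j < N.+1) (j < t)%N%:R * lam j ^+ m.+2.
  pose al j := \sum_(i < N.+1) (i < t)%N%:R * P j i.
  have hr : \sum_j al j * lam j ^+ m.+2 <= \sum_(j < N.+1) (j < t)%N%:R * lam j ^+ m.+2.
    apply: (@rearr N t (fun j => lam j ^+ m.+2) al t0 tN).
    - by move=> i j hij /=; rewrite lerXn2r ?nnegrE //; exact: ldec.
    - by move=> j; apply: sumr_ge0 => i _; rewrite mulr_ge0.
    - move=> j; rewrite -(hsj j) /al.
      by apply: ler_sum => i _; rewrite ler_piMl //; case: (i < t)%N.
    - rewrite /al exchange_big /=; apply: eq_bigr => i _.
      by rewrite -mulr_sumr hsi mulr1.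
  apply: le_trans hr.
  rewrite /al.
  have -> : \sum_j (\sum_(i < N.+1) (i < t)%N%:R * P j i) * lam j ^+ m.+2
     = \sum_(i < N.+1) (i < t)%N%:R * \sum_j P j i * lam j ^+ m.+2.
    rewrite (eq_bigr (fun j => \sum_(i < N.+1) (i < t)%N%:R * P j i * lam j ^+ m.+2)); last first.
      by move=> j _; rewrite mulr_suml.
    rewrite exchange_big /=; apply: eq_bigr => i _.
    rewrite mulr_sumr; apply: eq_bigr => j _; ring.
  apply: ler_sum => i _; apply: ler_wpM2l; first by case: (i < t)%N.
  apply: le_trans (S2 i); rewrite lerDl; apply: sumr_ge0 => j _; rewrite mulr_ge0 //.
have S7 : X - A ^+ m.+2 / 81 <= \sum_(i < N.+1) (i < t)%N%:R * x i ^+ m.+2.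
  rewrite lerBlDr -lerBlDl /X -sumrB.
  apply: le_trans tail1.
  have -> : N.+1%:R * ((1 - g) * A) ^+ m.+2 = \sum_(i < N.+1) ((1 - g) * A) ^+ m.+2.
    by rewrite sumr_const card_ord mulr_natl.
  apply: ler_sum => i _.
  case: (ltnP i t) => hi; first by rewrite mul1r subrr exprn_ge0 // mulr_ge0 //; [lra | exact: ltW].
  have hgA : 0 <= (1 - g) * A by rewrite mulr_ge0 //; [lra | exact: ltW].
  by rewrite mul0r subr0 lerXn2r ?nnegrE ?x0 ?hgA //; exact: H.
have hgp : 0 <= g / 4 * phi by rewrite mulr_ge0 //; lra.
have : g / 4 * phi * (X - A ^+ m.+2 / 81 - A ^+ m.+2 / 3) <=
       g / 4 * phi * (\sum_(j < N.+1) (j < t)%N%:R * lam j ^+ m.+2 - A ^+ m.+2 / 3).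
  by apply: ler_wpM2l => //; rewrite lerD2r; apply: le_trans S6.
lra.
Qed.

End B.



Section C.
Variable R : realType.
Implicit Types (d : nat).

Lemma quad_diag d (V : 'M[R]_d) (lam : 'I_d -> R) (w : 'cV_d) :
  (w^T *m (V *m diag_mx (\row_j lam j) *m V^T) *m w) 0 0
  = \sum_k lam k * ((V^T *m w) k 0) ^+ 2.
Proof.
have -> : w^T *m (V *m diag_mx (\row_j lam j) *m V^T) *m w
   = (V^T *m w)^T *m diag_mx (\row_j lam j) *m (V^T *m w).
  by rewrite trmx_mul trmxK !mulmxA.
rewrite mul_mx_diag !mxE; apply: eq_bigr => k _; rewrite !mxE; ring.
Qed.

Lemma quadD d (A B : 'M[R]_d) (w : 'cV_d) :
  (w^T *m (A + B) *m w) 0 0 = (w^T *m A *m w) 0 0 + (w^T *m B *m w) 0 0.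
Proof. by rewrite mulmxDr mulmxDl mxE. Qed.

Lemma quadZ d (a : R) (A : 'M[R]_d) (w : 'cV_d) :
  (w^T *m (a *: A) *m w) 0 0 = a * (w^T *m A *m w) 0 0.
Proof. by rewrite -scalemxAr -scalemxAl mxE. Qed.

Lemma quadB d (A B : 'M[R]_d) (w : 'cV_d) :
  (w^T *m (A - B) *m w) 0 0 = (w^T *m A *m w) 0 0 - (w^T *m B *m w) 0 0.
Proof.
have -> : A - B = A + (-1) *: B by rewrite scaleN1r.
by rewrite quadD quadZ mulN1r.
Qed.

Lemma colmul d (A B : 'M[R]_d) i k : (A *m col i B) k 0 = (A *m B) k i.
Proof. by rewrite !mxE; apply: eq_bigr => l _; rewrite !mxE. Qed.

Lemma orth_sum d (V U : 'M[R]_d) : V^T *m V = 1%:M -> U^T *m U = 1%:M ->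
  (forall j, \sum_i ((V^T *m U) j i) ^+ 2 = 1) /\
  (forall i, \sum_j ((V^T *m U) j i) ^+ 2 = 1).
Proof.
move=> hV hU.
have hV' : V *m V^T = 1%:M by exact: mulmx1C.
have hU' : U *m U^T = 1%:M by exact: mulmx1C.
split.
- move=> j.
  have : ((V^T *m U) *m (V^T *m U)^T) j j = 1.
    by rewrite trmx_mul trmxK mulmxA -(mulmxA _ U) hU' mulmx1 hV mxE eqxx.
  by rewrite mxE => <-; apply: eq_bigr => i _; rewrite !mxE expr2.
- move=> i.
  have : ((V^T *m U)^T *m (V^T *m U)) i i = 1.
    by rewrite trmx_mul trmxK mulmxA -(mulmxA _ V) hV' mulmx1 hU mxE eqxx.
  by rewrite mxE => <-; apply: eq_bigr => j _; rewrite !mxE expr2.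
Qed.

End C.



Section D.
Variable R : realType.

Lemma expR1_le3 : expR (1 : R) <= 3.
Proof.
have h : expR (1 : R) = expR (1 / 8) ^+ 8.
  by rewrite -expRM_natr; congr expR; rewrite mul1r mulVf.
have e0 : 0 < expR (1 / 8 : R) by exact: expR_gt0.
have h1 : expR (1 / 8 : R) <= 8 / 7.
  have := expR_ge1Dx (- (1 / 8) : R); rewrite expRN => H.
  have H2 : 7 / 8 <= (expR (1 / 8 : R))^-1 by lra.
  have ei : expR (1 / 8 : R) * (expR (1 / 8 : R))^-1 = 1 by rewrite mulfV // gt_eqF.
  move: (expR (1 / 8 : R)) (expR (1 / 8 : R))^-1 e0 H2 ei => a b a0 H2 ei.
  nra.
rewrite h.
have -> : (8 = 2 * 2 * 2)%N by [].
rewrite !exprM.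
set e := expR (1 / 8 : R) in e0 h1 *.
have a1 : e ^+ 2 <= 131 / 100.
  rewrite expr2; have : e * e <= 8 / 7 * (8 / 7) by apply: ler_pM; lra.
  lra.
have a1' : 0 <= e ^+ 2 by exact: sqr_ge0.
have a2 : (e ^+ 2) ^+ 2 <= 172 / 100.
  rewrite expr2; have : e ^+ 2 * e ^+ 2 <= 131 / 100 * (131 / 100) by apply: ler_pM; lra.
  lra.
have a2' : 0 <= (e ^+ 2) ^+ 2 by exact: sqr_ge0.
rewrite expr2; have : (e ^+ 2) ^+ 2 * (e ^+ 2) ^+ 2 <= 172 / 100 * (172 / 100) by apply: ler_pM; lra.
lra.
Qed.

Lemma exp_bound (z : R) : 3 / 2 <= z -> (1 + z) * expR (- z) <= 7 / 10.
Proof.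
move=> hz.
set w := z / 8.
have hw : 3 / 16 <= w by rewrite /w; lra.
have hE : expR z = expR w ^+ 8 by rewrite -expRM_natr /w; congr expR; field.
have h1 : (1 + w) ^+ 8 <= expR z.
  have a0 : 0 <= 1 + w by lra.
  have b0 : 0 <= expR w by exact: ltW (expR_gt0 _).
  by rewrite hE lerXn2r ?nnegrE // expR_ge1Dx.
have h2 : 1 + 4 * w + 6 * w ^+ 2 <= (1 + w) ^+ 4.
  have -> : (1 + w) ^+ 4 = 1 + 4 * w + 6 * w ^+ 2 + 4 * w ^+ 3 + w ^+ 4 by ring.
  have : 0 <= w ^+ 3 by rewrite exprn_ge0 //; lra.
  have : 0 <= w ^+ 4 by rewrite exprn_ge0 //; lra.
  lra.
have h3 : (1 + 4 * w + 6 * w ^+ 2) ^+ 2 <= (1 + w) ^+ 8.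
  have -> : (8 = 4 * 2)%N by [].
  rewrite exprM; apply: lerXn2r => //; rewrite nnegrE //.
  - have : 0 <= w ^+ 2 by exact: sqr_ge0.
    lra.
  - have : 0 <= w ^+ 2 by exact: sqr_ge0.
    have : 1 + 4 * w + 6 * w ^+ 2 <= (1 + w) ^+ 4 by [].
    lra.
have h4 : 10 * (1 + z) <= 7 * (1 + 4 * w + 6 * w ^+ 2) ^+ 2.
  have -> : z = 8 * w by rewrite /w; field.
  rewrite !expr2; nra.
rewrite expRN.
have ez : 0 < expR z by exact: expR_gt0.
rewrite ler_pdivrMr //; lra.
Qed.

End D.



Section E.
Variable R : realType.

Lemma pow_exp_ln (d p k : nat) (a : R) : 0 <= a -> a <= 1 ->
  a * p%:R = k%:R * ln (3 * d.+1%:R) -> (1 - a) ^+ p <= ((3 * d.+1%:R) ^+ k)^-1.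
Proof.
move=> a0 a1 h; apply: le_trans (pow_le_expR a p a0 a1) _.
rewrite h expRN expRM_natl lnK // posrE mulr_gt0 //.
Qed.

Lemma L_ge1 (d : nat) : 1 <= ln (3 * d.+1%:R : R).
Proof.
rewrite -[X in X <= _](expRK 1) ler_ln ?posrE ?expR_gt0 ?mulr_gt0 //.
apply: le_trans (expR1_le3 R) _.
rewrite -[X in X <= _]mulr1 ler_wpM2l // ler1n //.
Qed.

Lemma p4_params (n p : nat) (eps : R) : 0 < eps -> eps < 1/100 ->
  p%:R = 2 / 7 * Num.sqrt (ln (3 * n.+1%:R) / eps) ->
  [/\ 1 <= ln (3 * n.+1%:R : R), (2 <= p)%N, 0 < 14 * Num.sqrt (eps * ln (3 * n.+1%:R)),
      p%:R * (14 * Num.sqrt (eps * ln (3 * n.+1%:R))) = 4 * ln (3 * n.+1%:R) &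
      p%:R * eps = 14 * Num.sqrt (eps * ln (3 * n.+1%:R)) / 49].
Proof.
move=> e0 e1 hp.
set L := ln (3 * n.+1%:R : R).
have L1 : 1 <= L := L_ge1 n.
set q := Num.sqrt (L / eps).
have q0 : 0 <= q := sqrtr_ge0 _.
have Le0 : 0 <= L / eps by rewrite divr_ge0 //; lra.
have q2 : q ^+ 2 = L / eps by rewrite sqr_sqrtr.
have hs : Num.sqrt (eps * L) = eps * q.
  have -> : eps * L = eps ^+ 2 * (L / eps) by field; exact: lt0r_neq0.
  by rewrite sqrtrM ?sqr_ge0 // sqrtr_sqr ger0_norm //; exact: ltW.
rewrite hs.
move: hp; rewrite -/L -/q => hp; clearbody q.
have big : 100 <= L / eps.
  rewrite ler_pdivlMr //; lra.
have q10 : 10 <= q by nra.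
split => //.
- rewrite -(ler_nat R) hp; lra.
- rewrite mulr_gt0 // mulr_gt0 //; lra.
- rewrite hp.
  have -> : 2 / 7 * q * (14 * (eps * q)) = 4 * eps * q ^+ 2 by field.
  rewrite q2; field; exact: lt0r_neq0.
- by rewrite hp; field.
Qed.

Lemma lp_conv (n p : nat) (eps : R) (lam sig : 'I_n.+1 -> R) : (0 < p)%N -> 0 <= eps ->
  (forall j, 0 <= lam j) -> (forall i, 0 <= sig i) ->
  lp_norm p lam <= (1 + eps) * lp_norm p sig ->
  \sum_j lam j ^+ p <= (1 + eps) ^+ p * \sum_i sig i ^+ p.
Proof.
move=> p0 e0 l0 s0; rewrite /lp_norm.
under eq_bigr => j _ do rewrite ger0_norm //.
under [X in _ <= _ * X `^ _ -> _]eq_bigr => j _ do rewrite ger0_norm //.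
set a := \sum_j lam j ^+ p; set b := \sum_i sig i ^+ p.
have a0 : 0 <= a by apply: sumr_ge0 => j _; rewrite exprn_ge0.
have b0 : 0 <= b by apply: sumr_ge0 => j _; rewrite exprn_ge0.
have pn : (p%:R : R) != 0 by rewrite pnatr_eq0 -lt0n.
move=> H.
have := @ge0_ler_powR R p%:R (ler0n _ _) _ _ _ _ H.
rewrite -powRrM mulVf // powRr1 // powRM ?powR_ge0 //; last by lra.
rewrite -powRrM mulVf // powRr1 // powR_mulrn //; last by lra.
apply; rewrite nnegrE ?powR_ge0 //.
by rewrite mulr_ge0 ?powR_ge0 //; lra.
Qed.


Lemma phi_bound (m : nat) (gamma L : R) : 0 < gamma -> gamma < 1 -> 1 <= L ->
  m.+2%:R * gamma = 4 * L ->
  3 / 10 <= 1 - (1 - gamma / 2) ^+ m.+1 * (1 + m.+1%:R * (1 - (1 - gamma / 2))).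
Proof.
move=> g0 g1 L1 pg.
set z := gamma / 2 * m.+1%:R.
have hz : 3 / 2 <= z.
  have : m.+2%:R * gamma = m.+1%:R * gamma + gamma.
    by rewrite -addn1 natrD; ring.
  rewrite pg /z => h; lra.
have hb := @exp_bound R z hz.
have hp1 := pow_le_expR (gamma / 2) m.+1 ltac:(lra) ltac:(lra).
rewrite -/z in hp1.
have -> : m.+1%:R * (1 - (1 - gamma / 2)) = z by rewrite /z; ring.
have z0 : 0 <= 1 + z by lra.
have : (1 - gamma / 2) ^+ m.+1 * (1 + z) <= expR (- z) * (1 + z) by rewrite ler_wpM2r.
lra.
Qed.

Lemma p4_tails (n m : nat) (gamma A : R) : 0 < gamma -> gamma < 1 -> 0 < A ->
  m.+2%:R * gamma = 4 * ln (3 * n.+1%:R) ->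
  n.+1%:R * ((1 - gamma) * A) ^+ m.+2 <= A ^+ m.+2 / 81 /\
  n.+1%:R * ((1 - gamma / 4) * A) ^+ m.+2 <= A ^+ m.+2 / 3.
Proof.
move=> g0 g1 A0 pg.
have hA : 0 <= A ^+ m.+2 by rewrite exprn_ge0 // ltW.
have D0 : (0 : R) < n.+1%:R by rewrite ltr0n.
split.
- have h := @pow_exp_ln n m.+2 4 gamma (ltW g0) (ltW g1) ltac:(rewrite mulrC pg //).
  rewrite exprMn mulrA [_ / 81]mulrC; apply: ler_wpM2r => //.
  apply: le_trans (_ : n.+1%:R * ((3 * n.+1%:R) ^+ 4)^-1 <= _).
    by apply: ler_wpM2l; [exact: ler0n | exact: h].
  have -> : n.+1%:R * ((3 * n.+1%:R) ^+ 4)^-1 = (81 * (n.+1%:R : R) ^+ 3)^-1.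
    by field; rewrite gt_eqF.
  rewrite lef_pV2 ?posrE ?mulr_gt0 ?exprn_gt0 //.
  have : (1 : R) <= n.+1%:R ^+ 3 by rewrite exprn_ege1 // ler1n.
  lra.
- have h := @pow_exp_ln n m.+2 1 (gamma / 4) ltac:(lra) ltac:(lra)
    ltac:(rewrite (_ : gamma / 4 * m.+2%:R = (m.+2%:R * gamma) / 4); [rewrite pg; field | field]).
  rewrite exprMn mulrA [_ / 3]mulrC; apply: ler_wpM2r => //.
  apply: le_trans (_ : n.+1%:R * ((3 * n.+1%:R) ^+ 1)^-1 <= _).
    by apply: ler_wpM2l; [exact: ler0n | exact: h].
  have -> : n.+1%:R * ((3 * n.+1%:R) ^+ 1)^-1 = 3^-1 :> R by field; rewrite gt_eqF.
  by [].
Qed.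

Lemma final_step (m : nat) (eps gamma A phi SS SL X : R) :
  0 < eps -> eps < 1 / 100 -> 0 < gamma -> gamma < 1 -> m.+2%:R * eps = gamma / 49 ->
  0 < A -> X = (1 - eps) ^+ m.+2 * SS -> 0 <= SS -> A ^+ m.+2 <= X ->
  SL <= (1 + eps) ^+ m.+2 * SS -> 3 / 10 <= phi ->
  X + gamma / 4 * phi * (X - A ^+ m.+2 / 81 - A ^+ m.+2 / 3) <= SL -> False.
Proof.
move=> e0 e1 g0 g1 pe A0 hX SS0 AX hN' phi3 Hcore.
have X0 : 0 < X by apply: lt_le_trans AX; rewrite exprn_gt0.
have bern : (1 - 2 * gamma / 49) * (1 + eps) ^+ m.+2 <= (1 - eps) ^+ m.+2.
  have ha0 : 0 <= 2 * eps / (1 + eps) by rewrite divr_ge0; lra.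
  have ha1 : 2 * eps / (1 + eps) <= 1 by rewrite ler_pdivrMr; lra.
  have hb := p4_bernoulli (2 * eps / (1 + eps)) m.+2 ha0 ha1.
  have -> : 1 - eps = (1 + eps) * (1 - 2 * eps / (1 + eps)) by field; lra.
  rewrite exprMn [X in _ <= X]mulrC; apply: ler_wpM2r; first by rewrite exprn_ge0 //; lra.
  apply: le_trans hb.
  have : m.+2%:R * (2 * eps / (1 + eps)) <= 2 * (m.+2%:R * eps).
    have -> : m.+2%:R * (2 * eps / (1 + eps)) = 2 * (m.+2%:R * eps) / (1 + eps) by field; lra.
    rewrite ler_pdivrMr; last lra.
    have : 0 <= m.+2%:R * eps by rewrite mulr_ge0 //; lra.
    move: (m.+2%:R * eps) => u u0; nra.
  rewrite pe; lra.
have K : X * (1 + gamma * (3 / 40) * (53 / 81)) <= SL.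
  apply: le_trans Hcore.
  have hY : 53 / 81 * X <= X - A ^+ m.+2 / 81 - A ^+ m.+2 / 3 by lra.
  have : gamma / 4 * (3 / 10) * (53 / 81 * X) <= gamma / 4 * phi * (X - A ^+ m.+2 / 81 - A ^+ m.+2 / 3).
    apply: ler_pM; first by rewrite mulr_ge0 //; lra.
    - by rewrite mulr_ge0 //; lra.
    - by apply: ler_wpM2l => //; lra.
    - exact: hY.
  lra.
have Y : X >= (1 - 2 * gamma / 49) * SL.
  rewrite hX; apply: le_trans (_ : (1 - 2 * gamma / 49) * ((1 + eps) ^+ m.+2 * SS) <= _).
    by apply: ler_wpM2l => //; lra.
  by rewrite mulrA; apply: ler_wpM2r.
have : (1 - 2 * gamma / 49) * (X * (1 + gamma * (3 / 40) * (53 / 81))) <= X.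
  apply: le_trans Y; apply: ler_wpM2l => //; lra.
clear -X0 g0 g1 => H.
have h1 : 0 < X * gamma by rewrite mulr_gt0.
have h2 : X * gamma * gamma <= X * gamma by rewrite ger_pMr //; exact: ltW.
nra.
Qed.

End E.



Theorem proposition4 (R : realType) :
  exists c : R, 0 < c /\
  forall (n : nat) (eps : R) (p t : nat)
    (Sigma M MG MB V U : 'M[R]_n.+1) (lam sigma : 'I_n.+1 -> R),
  0 < eps -> eps < c ->
  (0 < p)%N ->
  p%:R = 2 / 7 * Num.sqrt (ln (3 * n.+1%:R) / eps) ->
  let gamma := 14 * Num.sqrt (eps * ln (3 * n.+1%:R)) in
  psd Sigma ->
  M = MG + MB ->
  psd MG -> psd MB ->
  eigdecomp M V lam ->
  eigdecomp Sigma U sigma ->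
  lp_norm p lam <= (1 + eps) * lp_norm p sigma ->
  loewner_ge ((1 + eps) *: Sigma) MG ->
  loewner_ge MG ((1 - eps) *: Sigma) ->
  (0 < t <= n.+1)%N ->
  (forall k : 'I_n.+1, nat_of_ord k = t -> sigma k < (1 - gamma) * sigma ord0) ->
  exists2 j : 'I_n.+1, (j < t)%N &
    ((col j V)^T *m Sigma *m col j V) 0 0 >= (1 - gamma) * sigma ord0.
Proof.
exists (1 / 100); split; first by lra.
move=> n eps p t Sigma M MG MB V U lam sigma e0 e1 p0 hp gamma hS hM hMG hMB
  [hV [hMd hlam]] [hU [hSd hsig]] hN hup hlow ht hsigt.
have [L1 p2 g0 pg pe] := p4_params R n p eps e0 e1 hp.
rewrite -/gamma in g0 pg pe.
set L := ln (3 * n.+1%:R : R) in L1 pg.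
have sigform : forall i, ((col i U)^T *m Sigma *m col i U) 0 0 = sigma i.
  move=> i; rewrite hSd quad_diag (bigD1 i) //= big1 ?addr0.
  - by rewrite colmul hU mxE eqxx expr1n mulr1.
  - by move=> k hk; rewrite colmul hU mxE (negbTE hk) /= expr0n /= mulr0.
have lamform : forall j, ((col j V)^T *m M *m col j V) 0 0 = lam j.
  move=> j; rewrite hMd quad_diag (bigD1 j) //= big1 ?addr0.
  - by rewrite colmul hV mxE eqxx expr1n mulr1.
  - by move=> k hk; rewrite colmul hV mxE (negbTE hk) /= expr0n /= mulr0.
have sig0 : forall i, 0 <= sigma i by move=> i; rewrite -sigform; exact: hS.2.
have Mq : forall w : 'cV[R]_n.+1, (1 - eps) * (w^T *m Sigma *m w) 0 0 <= (w^T *m M *m w) 0 0.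
  move=> w; rewrite hM quadD.
  have h1 := hlow.2 w; rewrite quadB quadZ in h1.
  have h2 := hMB.2 w.
  lra.
have lam0 : forall j, 0 <= lam j.
  move=> j; rewrite -lamform; apply: le_trans (Mq _); rewrite mulr_ge0 //; [lra | exact: hS.2].
pose P j i := ((V^T *m U) j i) ^+ 2.
have [hsj hsi] := @orth_sum R _ V U hV hU.
have C1 : forall i, (1 - eps) * sigma i <= \sum_j P j i * lam j.
  move=> i; rewrite -sigform; apply: le_trans (Mq _) _; rewrite hMd quad_diag.
  by rewrite (eq_bigr (fun j => P j i * lam j)) // => k _; rewrite colmul mulrC.
have FormV : forall j, ((col j V)^T *m Sigma *m col j V) 0 0 = \sum_i P j i * sigma i.
  move=> j; rewrite hSd quad_diag; apply: eq_bigr => k _; rewrite colmul mulrC /P.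
  by rewrite -[U^T *m V]trmxK trmx_mul trmxK [in LHS]mxE.
case: (lerP ((1 - gamma) * sigma ord0) 0) => hpos.
  exists ord0; first by case/andP: ht.
  by apply: le_trans hpos _; exact: hS.2.
have s0 : 0 < sigma ord0.
  rewrite lt0r sig0 andbT; apply/eqP => h; by move: hpos; rewrite h mulr0 ltxx.
have g1 : gamma < 1 by move: hpos; rewrite pmulr_lgt0 // => h; lra.
case: (pselect (exists2 j : 'I_n.+1, (j < t)%N &
   (1 - gamma) * sigma ord0 <= ((col j V)^T *m Sigma *m col j V) 0 0)) => // nE.
exfalso.
have F0 : forall j : 'I_n.+1, (j < t)%N -> \sum_i P j i * sigma i <= (1 - gamma) * sigma ord0.
  move=> j hj; rewrite -FormV.
  case: (lerP ((1 - gamma) * sigma ord0) (((col j V)^T *m Sigma *m col j V) 0 0)) => h.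
  - by exfalso; apply: nE; exists j.
  - exact: ltW.
have [m pm] : exists m, p = m.+2.
  by exists p.-2; case: p p2 {hp hN pg pe p0} => [|[|k]].
subst p.
have ht0 : (0 < t)%N by case/andP: ht.
have htN : (t <= n.+1)%N by case/andP: ht.
have e1' : eps < 1 by lra.
set A := (1 - eps) * sigma ord0.
have A0 : 0 < A by rewrite /A mulr_gt0 //; lra.
have hD : (1 : R) <= n.+1%:R by rewrite ler1n.
have phi3 := @phi_bound R m gamma L g0 g1 L1 pg.
set phi := 1 - (1 - gamma / 2) ^+ m.+1 * (1 + m.+1%:R * (1 - (1 - gamma / 2))) in phi3.
have phi0 : 0 <= phi by apply: le_trans phi3; lra.
have [tail1 tail2] := @p4_tails R n m gamma A g0 g1 A0 pg.
have P0 : forall j i, 0 <= P j i by move=> j i; exact: sqr_ge0.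
have x0 : forall i, 0 <= (1 - eps) * sigma i by move=> i; rewrite mulr_ge0 //; lra.
have hF : forall j : 'I_n.+1, (j < t)%N ->
    \sum_i P j i * ((1 - eps) * sigma i) <= (1 - gamma) * A.
  move=> j hj.
  have -> : \sum_i P j i * ((1 - eps) * sigma i) = (1 - eps) * \sum_i P j i * sigma i.
    by rewrite mulr_sumr; apply: eq_bigr => i _; ring.
  have : (1 - eps) * \sum_i P j i * sigma i <= (1 - eps) * ((1 - gamma) * sigma ord0).
    by apply: ler_wpM2l; [lra | exact: F0].
  by rewrite /A; lra.
have hH : forall i : 'I_n.+1, (t <= i)%N -> (1 - eps) * sigma i <= (1 - gamma) * A.
  move=> i hi.
  have htn : (t < n.+1)%N by apply: leq_trans (ltn_ord i).
  have h1 := hsigt (Ordinal htn) erefl.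
  have h2 : sigma i <= sigma (Ordinal htn) by apply: hsig.
  have : (1 - eps) * sigma i <= (1 - eps) * ((1 - gamma) * sigma ord0).
    by apply: ler_wpM2l; lra.
  by rewrite /A; lra.
have Hcore := @p4_core R n m t P lam (fun i => (1 - eps) * sigma i) A gamma phi
  P0 hsj hsi lam0 hlam x0 C1 hF hH erefl A0 ht0 htN g0 g1 erefl phi0 tail1 tail2.
move: Hcore.
set X := \sum_i ((1 - eps) * sigma i) ^+ m.+2.
set SL := \sum_j lam j ^+ m.+2.
move=> Hcore.
set SS := \sum_i sigma i ^+ m.+2.
have hX : X = (1 - eps) ^+ m.+2 * SS.
  by rewrite /X /SS mulr_sumr; apply: eq_bigr => i _; rewrite exprMn.
have SS0 : 0 <= SS by apply: sumr_ge0 => i _; rewrite exprn_ge0.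
have AX : A ^+ m.+2 <= X.
  by rewrite /X (bigD1 ord0) //= lerDl; apply: sumr_ge0 => i _; exact: exprn_ge0 (x0 i).
have hN' : SL <= (1 + eps) ^+ m.+2 * SS by apply: lp_conv => //; exact: ltW.
exact: (@final_step R m eps gamma A phi SS SL X e0 e1 g0 g1 pe A0 hX SS0 AX hN' phi3 Hcore).
Qed.
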